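(* Let $\iota:\mathrm{Aut}(T,\mathbf r)\to\mathrm S_n$ send an automorphism $f$ to the permutation of $\underline n$ which, for each leaf $(1,L)$, maps $L$ onto $L'$, where $f(1,L)=(1,L')$, by the unique order-preserving bijection. Then $\iota$ is an injective group morphism into $\operatorname{Stab}_{W_{\mathfrak g}}(\mathbf U)$ whose image meets $W_{\mathfrak h_1}$ trivially and normalises it, and the resulting injective group morphism $$\mathrm{Aut}(T,\mathbf r)\ltimes W_{\mathfrak h_1}\to\operatorname{Stab}_{W_{\mathfrak g}}(\mathbf U),\qquad (f,w)\mapsto\iota(f)\,w,$$ is surjective.
   Context: Let $n\ge2$, $\mathfrak g=\mathfrak{sl}_n(\mathbb C)$, $\mathfrak t=\{x\in\mathbb C^n:\sum x_a=0\}$, $W_{\mathfrak g}=\mathrm S_n$ permuting coordinates. Fix $p\ge1$, $A_1,\dots,A_p\in\mathfrak t$. For $l\in\{1,\dots,p+1\}$ let $P_l$ be the partition of $\underline n=\{1,\dots,n\}$ in which $a,b$ lie in the same part iff $(A_j)_a=(A_j)_b$ for all $l\le j\le p$ ($P_{p+1}=\{\underline n\}$). $W_{\mathfrak h_1}=\prod_{L\in P_1}\mathrm S_L\subseteq\mathrm S_n$. $U_l=\{x\in\mathfrak t:x_a=x_b$ whenever $a,b$ in the same part of $P_l\}$, and $\operatorname{Stab}_{W_{\mathfrak g}}(\mathbf U)=\{w\in\mathrm S_n:w(U_l)\subseteq U_l\ \forall l\le p\}$ (the paper also denotes this group $\widetilde{\mathrm{Aut}}(T,\mathbf r)$). Ranked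 fission tree $(T,\mathbf r)$: nodes are pairs $(l,L)$, $L$ a part of $P_l$; root $(p+1,\underline n)$; parent of $(l,L)$ is $(l+1,L')$ with $L\subseteq L'\in P_{l+1}$; rank $\mathbf r(l,L)=|L|$. $\mathrm{Aut}(T,\mathbf r)$ is the group of bijections of the node set fixing the root, commuting with the parent map and preserving ranks. The semidirect product uses the action of $\mathrm{Aut}(T,\mathbf r)$ on $W_{\mathfrak h_1}$ by conjugation through $\iota$. *)

(* Defs.v *)
From mathcomp Require Import all_boot all_order all_algebra all_fingroup.
Set Implicit Arguments. Unset Strict Implicit. Unset Printing Implicit Defensive.
Import GRing.Theory Num.Theory.

Definition mkperm (T : finType) (g : T -> T) : {perm T} :=
  match injectiveP g with ReflectT h => perm h | ReflectF _ => 1%g end.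

Section Fission.
Variables (C : numClosedFieldType) (n p : nat) (A : 'I_p -> 'I_n -> C).

(* Levels are 0-based: level l : 'I_p.+1 is the paper's level l+1, and
   A j (j : 'I_p) is the paper's A_{j+1}.  a, b in the same part of P_{l+1}
   iff (A_j)_a = (A_j)_b for all paper-indices j >= l+1. *)
Definition same (l : 'I_p.+1) (a b : 'I_n) : bool :=
  [forall j : 'I_p, (l <= j)%N ==> (A j a == A j b)].

Definition part (l : 'I_p.+1) (a : 'I_n) : {set 'I_n} := [set b | same l a b].

Definition Ppart (l : 'I_p.+1) : {set {set 'I_n}} := [set part l a | a : 'I_n].

Definition Node := {x : 'I_p.+1 * {set 'I_n} | x.2 \in Ppart x.1}.

Definition level (x : Node) : 'I_p.+1 := (val x).1.
Definition block (x : Node) : {set 'I_n} := (val x).2.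
Definition rank (x : Node) : nat := #|block x|.

Definition is_root (x : Node) : bool := level x == ord_max.

Definition is_parent (x y : Node) : bool :=
  ((level y : nat) == (level x).+1) && (block x \subset block y).

(* The parent map (the root is sent to itself). *)
Definition parent (x : Node) : Node := odflt x [pick y : Node | is_parent x y].

Definition AutT : {set {perm Node}} :=
  [set f : {perm Node} |
     [&& [forall x, is_root x ==> (f x == x)],
         [forall x, f (parent x) == parent (f x)] &
         [forall x, rank (f x) == rank x]]].

Lemma part_in (l : 'I_p.+1) (a : 'I_n) : part l a \in Ppart l.
Proof. exact: imset_f. Qed.

Definition node_of (l : 'I_p.+1) (a : 'I_n) : Node :=
  exist (fun x : 'I_p.+1 * {set 'I_n} => x.2 \in Ppart x.1) (l, part l a) (part_in l a).

(* iotaT(f): on each leaf L (level 0, the paper's level 1), the unique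
   order-preserving bijection L -> L' where f(1,L) = (1,L'). *)
Definition iota_fun (f : {perm Node}) (a : 'I_n) : 'I_n :=
  let L := part ord0 a in
  let L' := block (f (node_of ord0 a)) in
  nth a (enum L') (index a (enum L)).

Definition iotaT (f : {perm Node}) : {perm 'I_n} := mkperm (iota_fun f).

Definition W1 : {set {perm 'I_n}} := [set w : {perm 'I_n} | [forall a, same ord0 (w a) a]].

Definition inU (l : 'I_p.+1) (x : 'I_n -> C) : Prop :=
  (\sum_(a < n) x a = 0)%R /\ (forall a b, same l a b -> x a = x b).

Definition permact (w : {perm 'I_n}) (x : 'I_n -> C) : 'I_n -> C :=
  fun a => x ((w^-1)%g a).

(* Stab_{W_g}(U): w(U_l) \subseteq U_l for all paper levels l <= p. *)
Definition Stab (w : {perm 'I_n}) : Prop :=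
  forall l : 'I_p.+1, (l < p)%N ->
    forall x : 'I_n -> C, inU l x -> inU l (permact w x).

(* Semidirect product AutT(T,r) |x W_{h_1}, action by conjugation through iotaT
   (MathComp conventions: w ^ g = g^-1 * w * g). *)
Definition sdmul (u v : {perm Node} * {perm 'I_n}) : {perm Node} * {perm 'I_n} :=
  ((u.1 * v.1)%g, ((u.2 ^ iotaT v.1) * v.2)%g).

Definition sdmap (u : {perm Node} * {perm 'I_n}) : {perm 'I_n} := (iotaT u.1 * u.2)%g.

End Fission.

Arguments iotaT [C n p] A f.
Arguments sdmul [C n p] A u v.
Arguments sdmap [C n p] A u.

(* Main.v *)
Require Import Defs.
From mathcomp Require Import all_boot all_order all_algebra all_fingroup.
Import GRing.Theory Num.Theory.
Set Implicit Arguments. Unset Strict Implicit. Unset Printing Implicit Defensive.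

Section Aux.
Variables (C : numClosedFieldType) (n p : nat) (A : 'I_p -> 'I_n -> C).

Local Notation same := (same A).
Local Notation part := (part A).
Local Notation Node := (Node A).
Local Notation node_of := (node_of A).
Local Notation parent := (@parent _ _ _ A).
Local Notation level := (@level _ _ _ A).
Local Notation block := (@block _ _ _ A).
Local Notation rank := (@rank _ _ _ A).
Local Notation is_root := (@is_root _ _ _ A).
Local Notation is_parent := (@is_parent _ _ _ A).

Lemma same_refl l a : same l a a.
Proof. by apply/forallP => j; apply/implyP. Qed.

Lemma same_sym l a b : same l a b = same l b a.
Proof.
by apply/forallP/forallP => H j; apply/implyP => lj;
  move/implyP: (H j) => /(_ lj) /eqP ->.
Qed.

Lemma same_trans l a b c : same l a b -> same l b c -> same l a c.
Proof.
move=> /forallP H1 /forallP H2; apply/forallP => j; apply/implyP => lj.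
by move/implyP: (H1 j) => /(_ lj) /eqP ->; move/implyP: (H2 j) => /(_ lj).
Qed.

Lemma same_mono (l l' : 'I_p.+1) a b : (l <= l')%N -> same l a b -> same l' a b.
Proof.
move=> ll /forallP H; apply/forallP => j; apply/implyP => lj.
by move/implyP: (H j); apply; apply: leq_trans lj.
Qed.

Lemma same_top (l : 'I_p.+1) a b : (p <= l)%N -> same l a b.
Proof.
move=> pl; apply/forallP => j; apply/implyP => lj.
by have := leq_trans pl lj; rewrite leqNgt ltn_ord.
Qed.

Lemma mem_part l a b : (b \in part l a) = same l a b.
Proof. by rewrite inE. Qed.

Lemma part_eqP l a b : reflect (part l a = part l b) (same l a b).
Proof.
apply: (iffP idP) => [H|H].
  apply/setP => c; rewrite !mem_part; apply/idP/idP => Hc.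
    by apply: same_trans Hc; rewrite same_sym.
  exact: same_trans H Hc.
by rewrite -mem_part H mem_part same_refl.
Qed.

Lemma level_node_of l a : level (node_of l a) = l. Proof. by []. Qed.
Lemma block_node_of l a : block (node_of l a) = part l a. Proof. by []. Qed.

Lemma node_block (x : Node) : exists a, block x = part (level x) a.
Proof.
case: x => [[l L] /= H]; rewrite /block /level /=.
by case/imsetP: H => a _ ->; exists a.
Qed.

Lemma node_ofK (x : Node) a : a \in block x -> x = node_of (level x) a.
Proof.
case: (node_block x) => b Hb; rewrite Hb mem_part => /part_eqP Hab.
apply: val_inj => /=; rewrite -Hab -Hb; by case: x {Hb Hab} => [[l L] H].
Qed.

Lemma block_nonempty (x : Node) : exists a, a \in block x.
Proof. by case: (node_block x) => a ->; exists a; rewrite mem_part same_refl. Qed.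

Lemma node_of_eq l l' a b : (node_of l a = node_of l' b) <-> (l = l' /\ same l a b).
Proof.
split=> [H|[<- /part_eqP H]].
  have El : l = l' by have := congr1 level H.
  split=> //; subst l'; apply/part_eqP; exact: (congr1 block H).
by apply: val_inj => /=; rewrite H.
Qed.

Lemma node_cases (x : Node) : exists l a, x = node_of l a.
Proof. by case: (block_nonempty x) => a Ha; exists (level x), a; apply: node_ofK. Qed.

Lemma parent_node_of (l l' : 'I_p.+1) a :
  (l' : nat) = l.+1 -> parent (node_of l a) = node_of l' a.
Proof.
move=> Hl; rewrite /parent; case: pickP => [y /andP [/eqP Hy Hs] | H] /=.
  have Ha : a \in block y.
    by apply: (subsetP Hs); rewrite block_node_of mem_part same_refl.
  rewrite (node_ofK Ha); congr node_of; apply: val_inj; rewrite /= Hy Hl //.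
have := H (node_of l' a); rewrite /is_parent level_node_of Hl eqxx /=.
rewrite !block_node_of; move/negP; case; apply/subsetP => b.
rewrite !mem_part; apply: same_mono; rewrite Hl //.
Qed.

Lemma parent_top (x : Node) : (p <= level x)%N -> parent x = x.
Proof.
move=> H; rewrite /parent; case: pickP => [y /andP [/eqP Hy _] | //].
by have := ltn_ord (level y); rewrite Hy ltnS ltnNge H.
Qed.


Lemma is_rootE (x : Node) : is_root x = (p <= level x)%N.
Proof.
rewrite /is_root -val_eqE /= eqn_leq; have := ltn_ord (level x); rewrite ltnS => ->.
by [].
Qed.

Lemma level_parent (x : Node) : (level x < p)%N -> (level (parent x) : nat) = (level x).+1.
Proof.
case: (node_cases x) => l [a ->]; rewrite level_node_of => lp.
by rewrite (@parent_node_of l (Ordinal (lp : l.+1 < p.+1)%N)).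
Qed.

Section AutFacts.
Variable f : {perm Node}.
Hypothesis fA : f \in AutT A.

Lemma AutT_root x : is_root x -> f x = x.
Proof. by move: fA; rewrite inE => /and3P [/forallP H _ _] /(implyP (H x)) /eqP. Qed.

Lemma AutT_parent x : f (parent x) = parent (f x).
Proof. by move: fA; rewrite inE => /and3P [_ /forallP H _]; apply/eqP. Qed.

Lemma AutT_rank x : rank (f x) = rank x.
Proof. by move: fA; rewrite inE => /and3P [_ _ /forallP H]; apply/eqP. Qed.

Lemma AutT_root_refl x : is_root (f x) -> is_root x.
Proof. by move=> H; have := AutT_root H => /perm_inj E; rewrite -E. Qed.

Lemma AutT_level x : level (f x) = level x.
Proof.
apply: val_inj => /=.
suff H : forall k x, (p - level x <= k)%N -> (level (f x) : nat) = level x by apply: (H p) ; rewrite leq_subr.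
elim=> [|k IH] {}x Hk.
  have Hr : is_root x by rewrite is_rootE -subn_eq0 -leqn0.
  by rewrite AutT_root.
case: (leqP p (level x)) => Hp.
  by rewrite AutT_root // is_rootE.
have Hk' : (p - level (parent x) <= k)%N by rewrite level_parent // subnS -ltnS prednK ?subn_gt0.
have := IH _ Hk'; rewrite AutT_parent (level_parent Hp).
case: (leqP p (level (f x))) => Hq.
  by have := @AutT_root_refl x; rewrite is_rootE Hq => /(_ isT); rewrite is_rootE leqNgt Hp.
by rewrite level_parent // => [[]].
Qed.

Lemma iota_mem a : iota_fun f a \in block (f (node_of ord0 a)).
Proof.
rewrite /iota_fun -mem_enum; apply: mem_nth.
rewrite -cardE; have := AutT_rank (node_of ord0 a); rewrite /rank => ->.
by rewrite block_node_of cardE index_mem mem_enum mem_part same_refl.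
Qed.

Lemma AutT_node0 a : f (node_of ord0 a) = node_of ord0 (iota_fun f a).
Proof.
by rewrite (node_ofK (iota_mem a)) AutT_level.
Qed.

Lemma AutT_node l a : f (node_of l a) = node_of l (iota_fun f a).
Proof.
suff H : forall k, (k <= p)%N -> f (node_of (inord k) a) = node_of (inord k) (iota_fun f a).
  by have := H l; rewrite inord_val; apply; rewrite -ltnS.
elim=> [_|k IH Hk].
  have -> : (inord 0 : 'I_p.+1) = ord0 by apply: val_inj; rewrite /= inordK.
  exact: AutT_node0.
have E : ((inord k.+1 : 'I_p.+1) : nat) = (inord k : 'I_p.+1).+1.
  by rewrite !inordK // ltnS ltnW.
rewrite -(parent_node_of a E) -(parent_node_of (iota_fun f a) E) AutT_parent IH; [by [] | exact: ltnW].
Qed.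

Lemma iota_inj : injective (iota_fun f).
Proof.
move=> a b Hab.
have Hn : node_of ord0 a = node_of ord0 b.
  by apply: (@perm_inj _ f); rewrite !AutT_node0 Hab.
have Es := Hn; move/node_of_eq: Es => [_ /part_eqP Ep].
move: Hab; rewrite /iota_fun -Hn -Ep => Hab.
have Ha : a \in enum (part ord0 a) by rewrite mem_enum mem_part same_refl.
have Hb : b \in enum (part ord0 a) by rewrite Ep mem_enum mem_part same_refl.
apply: (index_inj a Ha Hb) => /=.
have Hs : size (enum (part ord0 a)) = size (enum (block (f (node_of ord0 a)))).
  by rewrite -!cardE; have := AutT_rank (node_of ord0 a); rewrite /rank => ->.
rewrite -[index a _](@index_uniq _ a _ (enum (block (f (node_of ord0 a))))) ?enum_uniq //;
  last by rewrite -Hs index_mem.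
rewrite -[index b _](@index_uniq _ b _ (enum (block (f (node_of ord0 a))))) ?enum_uniq //;
  last by rewrite -Hs index_mem.
by rewrite Hab.
Qed.

Lemma iotaTE a : iotaT A f a = iota_fun f a.
Proof.
rewrite /iotaT /mkperm; case: injectiveP => [H|H]; first by rewrite permE.
by case: H; apply: iota_inj.
Qed.

Lemma AutT_nodeT l a : f (node_of l a) = node_of l (iotaT A f a).
Proof. by rewrite iotaTE AutT_node. Qed.

Lemma same_iota l a b : same l (iotaT A f a) (iotaT A f b) = same l a b.
Proof.
apply/idP/idP => H.
  have : f (node_of l a) = f (node_of l b) by rewrite !AutT_nodeT; apply/node_of_eq.
  by move/perm_inj/node_of_eq => [].
have E : node_of l a = node_of l b by apply/node_of_eq.
have : node_of l (iotaT A f a) = node_of l (iotaT A f b) by rewrite -!AutT_nodeT E.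
by move/node_of_eq => [].
Qed.

Lemma idx_lt a : (index a (enum (part ord0 a)) < size (enum (block (f (node_of ord0 a)))))%N.
Proof.
rewrite -cardE; have := AutT_rank (node_of ord0 a); rewrite /rank => ->.
by rewrite block_node_of cardE index_mem mem_enum mem_part same_refl.
Qed.

End AutFacts.

Lemma AutT1 : (1 : {perm Node})%g \in AutT A.
Proof.
rewrite inE; apply/and3P; split; apply/forallP => x; rewrite ?perm1 ?eqxx //.
by apply/implyP.
Qed.

Lemma AutT_mul f g : f \in AutT A -> g \in AutT A -> (f * g)%g \in AutT A.
Proof.
move=> fA gA; rewrite inE; apply/and3P; split; apply/forallP => x; rewrite !permM.
- by apply/implyP => Hx; rewrite !AutT_root.
- by rewrite (AutT_parent fA) (AutT_parent gA).
- by rewrite (AutT_rank gA) (AutT_rank fA).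
Qed.

Lemma AutT_eq f g : f \in AutT A -> g \in AutT A ->
  (forall a, same ord0 (iotaT A f a) (iotaT A g a)) -> f = g.
Proof.
move=> fA gA H; apply/permP => x.
case: (node_cases x) => l [a ->]; rewrite (AutT_nodeT fA) (AutT_nodeT gA).
apply/node_of_eq; split=> //; apply: same_mono (H a); exact: leq0n.
Qed.

Lemma iotaT1 : iotaT A 1%g = 1%g.
Proof.
apply/permP => a; rewrite (iotaTE AutT1) perm1 /iota_fun perm1 block_node_of.
by rewrite nth_index // mem_enum mem_part same_refl.
Qed.

Lemma iotaTM f g : f \in AutT A -> g \in AutT A ->
  iotaT A (f * g)%g = (iotaT A f * iotaT A g)%g.
Proof.
move=> fA gA; apply/permP => a.
rewrite permM !iotaTE //; last exact: AutT_mul.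
set b := iota_fun f a.
have Hb : f (node_of ord0 a) = node_of ord0 b by exact: AutT_node0.
have Ei : index b (enum (part ord0 b)) = index a (enum (part ord0 a)).
  have -> : part ord0 b = block (f (node_of ord0 a)) by rewrite Hb.
  by rewrite /b /iota_fun index_uniq ?enum_uniq // idx_lt.
rewrite [LHS]/iota_fun [RHS]/iota_fun permM Hb Ei.
apply: set_nth_default; by have := idx_lt gA b; rewrite Ei.
Qed.

Lemma iotaT_Stab f : f \in AutT A -> Stab A (iotaT A f).
Proof.
move=> fA l _ x [Hs Hc]; split.
  rewrite /permact (reindex_inj (@perm_inj _ (iotaT A f))) /=.
  by under eq_bigr do rewrite permK.
move=> a b Hab; rewrite /permact; apply: Hc.
by rewrite -(same_iota fA) !permKV.
Qed.

Lemma W1_conj f : f \in AutT A -> (W1 A :^ iotaT A f)%g = W1 A.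
Proof.
move=> fA.
have Hsub : forall w, w \in W1 A -> (w ^ iotaT A f)%g \in W1 A.
  move=> w; rewrite !inE => /forallP Hw; apply/forallP => a.
  rewrite /conjg !permM; set c := ((iotaT A f)^-1)%g a.
  have -> : a = iotaT A f c by rewrite /c permKV.
  by rewrite (same_iota fA).
apply/eqP; rewrite eqEcard cardJg leqnn andbT.
apply/subsetP => w; rewrite mem_conjg => /Hsub.
by rewrite conjgKV.
Qed.

Lemma W1_triv : (iotaT A @: AutT A :&: W1 A \subset [1])%g.
Proof.
apply/subsetP => w; rewrite !inE => /andP [/imsetP [f fA ->] /forallP Hw].
have -> : f = 1%g.
  apply: AutT_eq => // [|a]; first exact: AutT1.
  by rewrite iotaT1 perm1.
by rewrite iotaT1.
Qed.

Section Surj.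
Variable w : {perm 'I_n}.
Hypothesis Hw : Stab A w.
Hypothesis n_gt0 : (0 < n)%N.

Lemma w_inv_same l c d : same l c d -> same l ((w^-1)%g c) ((w^-1)%g d).
Proof.
move=> Hcd; case: (ltnP l p) => lp; last exact: same_top.
set B := part l ((w^-1)%g c).
pose x : 'I_n -> C := fun e => (n%:R * (if e \in B then 1 else 0) - #|B|%:R)%R.
have xU : inU A l x.
  split.
    rewrite /x big_split /= sumrN -mulr_sumr -big_mkcond /= !sumr_const card_ord.
    by rewrite mulrC mulr_natr subrr.
  move=> a b Hab; rewrite /x !mem_part.
  have -> : same l ((w^-1)%g c) a = same l ((w^-1)%g c) b; last by [].
  apply/idP/idP => H; first exact: same_trans H Hab.
  by apply: same_trans H _; rewrite same_sym.
have := (Hw lp xU).2 c d Hcd; rewrite /permact /x => /addIr /mulfI.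
rewrite pnatr_eq0 -lt0n n_gt0 => /(_ isT).
rewrite mem_part same_refl; case: ifP; first by rewrite mem_part.
by move=> _ /eqP; rewrite oner_eq0.
Qed.

Lemma w_same_fwd l c d : same l c d -> same l (w c) (w d).
Proof.
move=> H.
have Hk : forall k c d, same l c d -> same l (((w^-1) ^+ k)%g c) (((w^-1) ^+ k)%g d).
  elim=> [|k IH] c' d' H'; first by rewrite expg0 !perm1.
  by rewrite expgS !permM; apply: IH; apply: w_inv_same.
have E : w = (((w^-1) ^+ #[(w^-1)%g].-1)%g) by rewrite -invg_expg invgK.
by rewrite E; apply: Hk.
Qed.

Lemma same_w l c d : same l (w c) (w d) = same l c d.
Proof.
apply/idP/idP => H; last exact: w_same_fwd.
by have := w_inv_same H; rewrite !permK.
Qed.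

Lemma imset_part l a : w @: part l a = part l (w a).
Proof.
apply/setP => d; apply/imsetP/idP => [[b Hb ->] | H].
  by rewrite mem_part same_w -mem_part.
exists ((w^-1)%g d); last by rewrite permKV.
by rewrite mem_part -same_w permKV -mem_part.
Qed.

Definition fnode (x : Node) : Node := insubd x (level x, w @: block x).

Lemma fnodeE l a : fnode (node_of l a) = node_of l (w a).
Proof.
apply: val_inj; rewrite /fnode insubdK /=; first by rewrite imset_part.
by rewrite /= imset_part; apply: part_in.
Qed.

Lemma fnode_inj : injective fnode.
Proof.
move=> x y; case: (node_cases x) => l [a ->]; case: (node_cases y) => l' [b ->].
rewrite !fnodeE => /node_of_eq [El H]; subst l'.
by apply/node_of_eq; split=> //; rewrite -same_w.
Qed.

Definition Fw : {perm Node} := perm fnode_inj.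

Lemma FwE l a : Fw (node_of l a) = node_of l (w a).
Proof. by rewrite permE fnodeE. Qed.

Lemma Fw_AutT : Fw \in AutT A.
Proof.
rewrite inE; apply/and3P; split; apply/forallP => x;
  case: (node_cases x) => l [a ->]; rewrite ?FwE.
- apply/implyP; rewrite is_rootE level_node_of => Hl; apply/eqP/node_of_eq.
  by split=> //; apply: same_top.
- case: (ltnP l p) => lp.
    have E : (Ordinal (lp : l.+1 < p.+1)%N : nat) = l.+1 by [].
    by rewrite !(parent_node_of _ E) FwE.
  by rewrite !parent_top ?level_node_of // FwE.
- by rewrite /rank !block_node_of -imset_part card_imset //; apply: perm_inj.
Qed.

Lemma Fw_W1 : ((iotaT A Fw)^-1 * w)%g \in W1 A.
Proof.
rewrite inE; apply/forallP => a; rewrite permM.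
set c := ((iotaT A Fw)^-1)%g a.
have -> : a = iotaT A Fw c by rewrite /c permKV.
have := AutT_nodeT Fw_AutT ord0 c; rewrite FwE => /node_of_eq [_ H].
exact: H.
Qed.

End Surj.

End Aux.

Theorem proposition4p15 (C : numClosedFieldType) (n p : nat)
  (A : 'I_p -> 'I_n -> C) :
  (2 <= n)%N -> (1 <= p)%N ->
  (forall j : 'I_p, (\sum_(a < n) A j a = 0)%R) ->
  (* iotaT is an injective group morphism AutT(T,r) -> Stab(U) *)
  {in AutT A &, {morph iotaT A : f g / (f * g)%g}} /\
  {in AutT A &, injective (iotaT A)} /\
  {in AutT A, forall f, Stab A (iotaT A f)} /\
  (* its image meets W_{h_1} trivially and normalises it *)
  ((iotaT A @: AutT A) :&: W1 A \subset [1])%g /\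
  {in AutT A, forall f, (W1 A :^ iotaT A f)%g = W1 A} /\
  (* the map AutT |x W_{h_1} -> Stab(U), (f,w) |-> iotaT(f) w, is an injective
     group morphism, and it is surjective *)
  {in setX (AutT A) (W1 A) &, {morph sdmap A : u v / sdmul A u v >-> (u * v)%g}} /\
  {in setX (AutT A) (W1 A) &, injective (sdmap A)} /\
  (forall w : {perm 'I_n}, Stab A w ->
     exists2 u, u \in setX (AutT A) (W1 A) & sdmap A u = w).
Proof.
move=> n2 _ _.
split; first by move=> f g fA gA; apply: iotaTM.
split.
  move=> f g fA gA E; apply: AutT_eq => // a; rewrite E; exact: same_refl.
split; first by move=> f fA; apply: iotaT_Stab.
split; first exact: W1_triv.
split; first by move=> f fA; apply: W1_conj.
split.
  move=> [f u] [g v]; rewrite !in_setX /= => /andP [fA uW] /andP [gA vW].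
  rewrite /sdmap /sdmul /= iotaTM // /conjg !mulgA mulgK.
  by [].
split.
  move=> [f u] [g v]; rewrite !in_setX /= => /andP [fA uW] /andP [gA vW].
  rewrite /sdmap /= => E.
  have Efg : f = g.
    apply: AutT_eq => // a.
    move: uW vW; rewrite !inE => /forallP Hu /forallP Hv.
    have := f_equal (fun s : {perm 'I_n} => s a) E; rewrite /= !permM => Ea.
    have H1 : same A ord0 (iotaT A f a) (u (iotaT A f a)) by rewrite same_sym.
    have H2 := Hv (iotaT A g a); rewrite -Ea in H2.
    by eapply same_trans; [exact: H1 | exact: H2].
  subst g; congr pair; exact: mulgI E.
move=> w Hw.
have n0 : (0 < n)%N by apply: leq_trans n2.
exists (Fw Hw n0, ((iotaT A (Fw Hw n0))^-1 * w)%g).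
  by rewrite in_setX Fw_AutT Fw_W1.
by rewrite /sdmap /= mulKVg.
Qed.
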